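(* Let $p$ be an obstacle and $(p_n)$ an approximating sequence as in the context. Let ${\boldsymbol v}\in C([0,T];{\boldsymbol W}_\sigma(\Omega))$ satisfy $|{\boldsymbol v}|\le p$ on $Q$ and $\operatorname{supp}({\boldsymbol v})\subset\{(x,t)\in\Omega\times[0,T]: p(x,t)\ge\delta\}$ for some $\delta>0$. Put $M=\delta+\sup_{(x,t)\in Q}|{\boldsymbol v}(x,t)|$ and $$\delta_n=\frac1\delta\max_{\operatorname{supp}({\boldsymbol v})}|\min\{p,M\}-\min\{p_n,M\}|,\quad n\in\mathbb N.$$ Then $\delta_n\to0$ as $n\to\infty$, and for every $n$, $(1-\delta_n)^+{\boldsymbol v}(t)\in K(p_n;t)$ for all $t\in[0,T]$.
   Context: $\Omega\subset\mathbb R^3$ is a bounded domain with smooth boundary, $0<T<\infty$, $Q=\Omega\times(0,T)$, $\overline Q$ its closure. ${\boldsymbol W}_\sigma(\Omega)$, ${\boldsymbol V}_\sigma(\Omega)$ are the closures of the smooth compactly supported divergence-free fields $\Omega\to\mathbb R^3$ in $W^{1,4}_0(\Omega)^3$ and $H^1_0(\Omega)^3$. $\operatorname{supp}$ denotes the closure of the set where a function is nonzero. Obstacle: $p:\overline Q\to[0,\infty]$ continuous as a map into the extended half-line $[0,\infty]$ (equivalently $p/(1+p)$, set to $1$ where $p=\infty$, is continuous). Approximating sequence: $p_n:\overline Q\to(0,\infty)$ Lipschitz, such that (a) for every $\kappa\in(0,\infty)$, $p_n\to p$ uniformly on $\{(x,t)\in\overline Q: p(x,t)\le\kappa\}$;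 (b) for every sufficiently large $M>0$ there is $n_M$ with $M\le p_n\le p$ on $\{(x,t)\in\overline Q:p(x,t)>M\}$ for all $n\ge n_M$. $K(p_n;t)=\{{\boldsymbol z}\in{\boldsymbol V}_\sigma(\Omega): |{\boldsymbol z}(x)|\le p_n(x,t)\text{ a.e.}\}$. $a^+=\max\{a,0\}$. *)

(* Defs.v *)
From HB Require Import structures.
From mathcomp Require Import all_boot all_order all_algebra.
From mathcomp Require Import all_classical all_reals all_analysis.
Set Implicit Arguments. Unset Strict Implicit. Unset Printing Implicit Defensive.
Import Order.TTheory GRing.Theory Num.Theory.
Import numFieldNormedType.Exports.
Local Open Scope classical_set_scope.
Local Open Scope ring_scope.

Definition R3 (R : realType) := ((R * R) * R)%type.

Definition comp3 {R : realType} (i : 'I_3) (x : R3 R) : R :=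
  if (i == 0 :> nat) then x.1.1 else if (i == 1 :> nat) then x.1.2 else x.2.
Definition e3 {R : realType} (i : 'I_3) : R3 R :=
  (((i == 0 :> nat)%:R, (i == 1 :> nat)%:R), (i == 2 :> nat)%:R).

Definition enorm {R : realType} (x : R3 R) : R :=
  Num.sqrt (\sum_(i < 3) comp3 i x ^+ 2).

Definition leb3 {R : realType} :=
  ((@lebesgue_measure R \x @lebesgue_measure R) \x @lebesgue_measure R)%E.

Definition LqO {R : realType} (A : set (R3 R)) (q : R) (f : R3 R -> R) : \bar R :=
  Lnorm (@leb3 R) q%:E (EFin \o (f \_ A)).

Definition dpart {R : realType} {V : normedModType R} (i : 'I_3)
  (f : R3 R -> V) : R3 R -> V := fun x => 'D_(e3 i) f x.
Fixpoint ipart {R : realType} {V : normedModType R} (s : seq 'I_3)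
  (f : R3 R -> V) : R3 R -> V :=
  match s with [::] => f | i :: s' => dpart i (ipart s' f) end.
Definition smooth {R : realType} {V : normedModType R} (f : R3 R -> V) : Prop :=
  forall s : seq 'I_3,
    continuous (ipart s f) /\ forall (i : 'I_3) (x : R3 R), derivable (ipart s f) x (e3 i).

(** bounded domain with smooth boundary (global smooth defining function) *)
Definition smooth_bounded_domain {R : realType} (Om : set (R3 R)) : Prop :=
  [/\ open Om, connected Om, Om !=set0,
      (exists r : R, forall x, Om x -> enorm x <= r) &
      exists rho : R3 R -> R^o, smooth rho /\ Om = [set x | rho x < 0] /\
        forall x, rho x = 0 -> exists i : 'I_3, dpart i rho x != 0].

Definition support3 {R : realType} (f : R3 R -> R3 R) : set (R3 R) :=
  closure [set x | f x != 0].

Definition test_sigma {R : realType} (Om : set (R3 R)) (phi : R3 R -> R3 R) : Prop :=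
  [/\ smooth phi, compact (support3 phi), support3 phi `<=` Om &
      forall x, \sum_(i < 3) comp3 i (dpart i phi x) = 0].

(** u lies in the closure of the fields satisfying P in W^{1,q}(Om)^3, with
    (weak) gradient G (G i = partial derivative in direction i) *)
Definition sob_grad {R : realType} (Om : set (R3 R)) (q : R)
  (P : (R3 R -> R3 R) -> Prop) (u : R3 R -> R3 R) (G : 'I_3 -> R3 R -> R3 R) : Prop :=
  (forall j : 'I_3, measurable_fun Om (comp3 j \o u)) /\
  (forall i j : 'I_3, measurable_fun Om (comp3 j \o G i)) /\
  exists phi : nat -> R3 R -> R3 R, (forall k, P (phi k)) /\
    forall j : 'I_3,
      (LqO Om q (fun x => comp3 j (phi k x - u x)) @[k --> \oo] --> 0%E) /\
      forall i : 'I_3,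
        (LqO Om q (fun x => comp3 j (dpart i (phi k) x - G i x)) @[k --> \oo] --> 0%E).

Definition sob_closure {R : realType} (Om : set (R3 R)) (q : R)
  (P : (R3 R -> R3 R) -> Prop) (u : R3 R -> R3 R) : Prop :=
  exists G, sob_grad Om q P u G.

Definition W_sigma {R : realType} (Om : set (R3 R)) := sob_closure Om 4 (test_sigma Om).
Definition V_sigma {R : realType} (Om : set (R3 R)) := sob_closure Om 2 (test_sigma Om).

Definition C_W_sigma {R : realType} (Om : set (R3 R)) (T : R) (v : R -> R3 R -> R3 R) : Prop :=
  exists G : R -> 'I_3 -> R3 R -> R3 R,
    (forall t, 0 <= t <= T -> sob_grad Om 4 (test_sigma Om) (v t) (G t)) /\
    forall t, 0 <= t <= T -> forall e : R, 0 < e -> exists d : R, 0 < d /\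
      forall s, 0 <= s <= T -> `|s - t| < d -> forall j : 'I_3,
        (LqO Om 4 (fun x => comp3 j (v s x - v t x)%R) <= e%:E)%E /\
        forall i : 'I_3, (LqO Om 4 (fun x => comp3 j (G s i x - G t i x)%R) <= e%:E)%E.

Definition Qset {R : realType} (Om : set (R3 R)) (T : R) : set (R3 R * R) :=
  Om `*` `]0, T[.
Definition Qbar {R : realType} (Om : set (R3 R)) (T : R) : set (R3 R * R) :=
  closure (Qset Om T).

Definition obstacle {R : realType} (Om : set (R3 R)) (T : R) (p : R3 R -> R -> \bar R) : Prop :=
  {within Qbar Om T, continuous (fun z : R3 R * R => p z.1 z.2)} /\
  forall z, Qbar Om T z -> (0 <= p z.1 z.2)%E.

Definition approx_seq {R : realType} (Om : set (R3 R)) (T : R) (p : R3 R -> R -> \bar R)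
  (pn : nat -> R3 R -> R -> R) : Prop :=
  [/\ (forall n z, Qbar Om T z -> 0 < pn n z.1 z.2),
      (forall n, exists L : R, forall z w, Qbar Om T z -> Qbar Om T w ->
          `|pn n z.1 z.2 - pn n w.1 w.2| <= L * (enorm (z.1 - w.1) + `|z.2 - w.2|)),
      (forall kappa : R, 0 < kappa -> forall e : R, 0 < e -> exists N : nat,
          forall n z, (N <= n)%N -> Qbar Om T z -> (p z.1 z.2 <= kappa%:E)%E ->
            (`|(pn n z.1 z.2)%:E - p z.1 z.2| <= e%:E)%E) &
      (exists M0 : R, forall M : R, M0 <= M -> 0 < M -> exists nM : nat,
          forall n z, (nM <= n)%N -> Qbar Om T z -> (M%:E < p z.1 z.2)%E ->
            M <= pn n z.1 z.2 /\ ((pn n z.1 z.2)%:E <= p z.1 z.2)%E)].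

Definition Kset {R : realType} (Om : set (R3 R)) (pn : R3 R -> R -> R) (t : R)
  (z : R3 R -> R3 R) : Prop :=
  V_sigma Om z /\ {ae @leb3 R, forall x, Om x -> enorm (z x) <= pn x t}.

Definition supp_v {R : realType} (Om : set (R3 R)) (T : R) (v : R -> R3 R -> R3 R) :
  set (R3 R * R) :=
  closure [set z | Om z.1 /\ 0 <= z.2 <= T /\ v z.2 z.1 != 0].

(* Main.v *)
Require Import Defs.
From HB Require Import structures.
From mathcomp Require Import all_boot all_order all_algebra.
From mathcomp Require Import all_classical all_reals all_analysis.
From mathcomp Require Import ring lra.
Import Order.TTheory GRing.Theory Num.Theory.
Import numFieldNormedType.Exports.
Local Open Scope classical_set_scope.
Local Open Scope ring_scope.

Section S.
Import HBNNSimple.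
Local Open Scope ereal_scope.
Lemma keyS d (T : measurableType d) (R : realType) (mu : {measure set T -> \bar R})
  (B : set T) (mB : measurable B) (m : R) (muB : mu B <= m%:E)
  (f h : T -> R) (f0 : forall x, (0 <= f x)%R) (fB : forall x, ~ B x -> f x = 0%R)
  (fh : forall x, (f x ^+ 2 <= h x)%R) (eps : R) (e0 : (0 < eps)%R) :
  \int[mu]_x (f x)%:E <= ((eps^+2/2 * m)%:E + ((2*eps^+2)^-1)%:E * \int[mu]_x (h x)%:E).
Proof.
have h0 : forall x, (0 <= h x)%R by move=> x; apply: le_trans (fh x); exact: sqr_ge0.
rewrite ge0_integralTE; last by move=> x; rewrite lee_fin.
rewrite ge0_integralTE; last by move=> x; rewrite lee_fin.
apply: ge_ereal_sup => _ [s /= sf <-].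
have sB : forall x, ~ B x -> s x = 0%R.
  move=> x nB; apply/eqP; rewrite eq_le fun_ge0 andbT -lee_fin.
  by rewrite -(fB x nB) sf.
have k1 : (0 <= eps^+2/2)%R by rewrite divr_ge0 // sqr_ge0.
have k2 : (0 <= (2*eps^+2)^-1)%R by rewrite invr_ge0 mulr_ge0 // sqr_ge0.
pose s2 := mul_nnsfun s s.
pose g := add_nnsfun (scale_nnsfun (indic_nnsfun R mB) k1) (scale_nnsfun s2 k2).
have sg : forall x, (s x <= g x)%R.
  move=> x; rewrite /g /= /s2 /= /indic /=.
  case: (pselect (B x)) => Bx.
    rewrite measurable_realfun.mindicE /= (_ : (x \in B) = true); last by apply/mem_set.
    rewrite mulr1.
    have : (0 <= (eps - s x / eps)^+2)%R by apply: sqr_ge0.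
    have en : eps != 0%R by rewrite gt_eqF.
    move=> H.
    suff : (s x <= eps ^+ 2 / 2 + (2 * eps ^+ 2)^-1 * (s x * s x))%R by [].
    have E : (eps ^+ 2 / 2 + (2 * eps ^+ 2)^-1 * (s x * s x) - s x = (eps - s x / eps)^+2 / 2)%R.
      by field.
    by rewrite -subr_ge0 E divr_ge0.
  rewrite sB //; apply: addr_ge0; apply: mulr_ge0 => //.
apply: le_trans (le_sintegral mu sg) _.
rewrite sintegralD /= sintegralrM sintegralrM.
apply: leeD.
  rewrite (eq_sintegral (\1_B)); last by move=> x.
  by rewrite sintegral_indic (EFinM (eps^+2/2)); apply: lee_wpmul2l; rewrite ?lee_fin.
  idtac.
apply: lee_wpmul2l; first by rewrite lee_fin.
apply: ereal_sup_ubound; exists s2 => //= x.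
rewrite lee_fin; apply: le_trans (fh x).
have sx := sf x; rewrite lee_fin in sx.
by rewrite expr2 ler_pM //; apply: fun_ge0.
Qed.
End S.

Lemma cvge0P (R : realType) (u : nat -> \bar R) (u0 : forall k, (0 <= u k)%E) :
  u k @[k --> \oo] --> 0%E <-> forall e : R, 0 < e -> \forall k \near \oo, (u k <= e%:E)%E.
Proof.
split.
  move=> /fine_cvgP [uf uc] e e0.
  move/cvgrPdist_le : uc => /(_ e e0) H.
  apply: filterS2 H uf => k H1 ufk.
  rewrite -(fineK ufk) lee_fin; move: H1; rewrite sub0r normrN /=.
  by apply: le_trans; apply: ler_norm.
move=> H; apply/fine_cvgP; split.
  have := H 1 ltr01; apply: filterS => k uk.
  by rewrite ge0_fin_numE ?(le_lt_trans uk) ?ltry.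
apply/cvgrPdist_le => e e0; have := H e e0; apply: filterS => k uk.
rewrite sub0r normrN /= ger0_norm ?fine_ge0 //.
have uf : u k \is a fin_num by rewrite ge0_fin_numE ?(le_lt_trans uk) ?ltry.
by rewrite -lee_fin fineK.
Qed.

Lemma LqO_E (R : realType) (A : set (R3 R)) (q : R) (f : R3 R -> R) :
  LqO A q f = ((\int[@leb3 R]_x (`|f \_ A x| `^ q)%:E) `^ q^-1)%E.
Proof.
rewrite /LqO unlock /=; congr (_ `^ _)%E; apply: eq_integral => x _ /=.

Qed.

Lemma L42 (R : realType) (A B : set (R3 R)) (mB : measurable B) (AB : A `<=` B)
  (finB : @leb3 R B \is a fin_num) (c : R) (hc : `|c| <= 1) (g : nat -> R3 R -> R) :
  LqO A 4 (g k) @[k --> \oo] --> 0%E ->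
  LqO A 2 (fun x => c * g k x) @[k --> \oo] --> 0%E.
Proof.
move=> /cvge0P H; have {}H := H (fun k => ltac:(rewrite LqO_E; exact: poweR_ge0)); apply/cvge0P => [k|e e0]; first by rewrite LqO_E poweR_ge0.
set m := fine (@leb3 R B).
have m0 : 0 <= m by rewrite fine_ge0.
have muB : (@leb3 R B <= m%:E)%E by rewrite fineK.
set eps := e / (m + 1).
have eps0 : 0 < eps by rewrite divr_gt0 // ltr_wpDl.
set eta := eps ^+ 2 * e ^+ 2.
have eta0 : 0 < eta by rewrite mulr_gt0 // exprn_gt0.
have H1 := H (eta `^ 4^-1) (powR_gt0 _ eta0).
apply: filterS H1 => k; rewrite !LqO_E.
set a := (\int[_]_x _)%E; set b := (\int[_]_x _)%E => Hk.
have a0 : (0 <= a)%E by apply: integral_ge0 => x _; rewrite lee_fin powR_ge0.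
have b0 : (0 <= b)%E by apply: integral_ge0 => x _; rewrite lee_fin powR_ge0.
have aeta : (a <= eta%:E)%E.
  have -> : a = ((a `^ 4^-1) `^ 4)%E by rewrite -poweRrM mulVf ?poweRe1 // pnatr_eq0.
  have -> : eta = (eta `^ 4^-1) `^ 4 by rewrite -powRrM mulVf ?powRr1 ?pnatr_eq0 // ltW.
  rewrite -poweR_EFin; apply: gt0_ler_poweR => //; rewrite ?in_itv /= ?poweR_ge0 ?lee_fin ?powR_ge0 ?leey //.
have f0 : forall x, 0 <= `|(fun x => c * g k x) \_ A x| `^ 2 by move=> x; apply: powR_ge0.
have fB : forall x, ~ B x -> `|(fun x => c * g k x) \_ A x| `^ 2 = 0.
  move=> x nB; rewrite patchE (_ : (x \in A) = false) ?normr0 ?powR0 ?pnatr_eq0 //.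
  by apply/negbTE/negP => /set_mem /AB.
have fh : forall x, (`|(fun x => c * g k x) \_ A x| `^ 2) ^+ 2 <= `|g k \_ A x| `^ 4.
  move=> x; rewrite !patchE; case: ifP => _; last by rewrite normr0 !powR0 ?pnatr_eq0 // expr0n.
  rewrite !powR_mulrn ?normr_ge0 // -exprM normrM exprMn.
  apply: ler_piMl; first by rewrite exprn_ge0.
  by rewrite exprn_ile1.
have Hb := @keyS _ _ R (@leb3 R) B mB m muB _ _ f0 fB fh eps eps0.
have {Hb}Hb : (b <= (e ^+ 2)%:E)%E.
  apply: (le_trans Hb).
  apply: le_trans (leeD2l _ (lee_wpmul2l _ aeta)) _.
    by rewrite lee_fin invr_ge0 mulr_ge0 // sqr_ge0.
  rewrite -EFinM -EFinD lee_fin.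
  have E1 : (2 * eps ^+ 2)^-1 * eta = e ^+ 2 / 2.
    rewrite /eta; field; rewrite gt_eqF //.
  rewrite E1 [X in _ <= X](splitr (e ^+ 2)) lerD2r.
  have : eps ^+ 2 * m <= e ^+ 2.
    rewrite /eps expr_div_n mulrAC ler_pdivrMr ?exprn_gt0 ?ltr_wpDl //.
    rewrite ler_pM2l ?exprn_gt0 //; nra.
  move=> H2; rewrite mulrAC; rewrite ler_pM2r // invr_gt0 //.
have -> : e = Num.sqrt (e ^+ 2) by rewrite sqrtr_sqr ger0_norm // ltW.
rewrite -powR12_sqrt ?sqr_ge0 // -poweR_EFin.
apply: gt0_ler_poweR => //; rewrite ?in_itv /= ?lee_fin ?sqr_ge0 ?leey ?b0 //.
Qed.

Lemma comp3Z (R : realType) (c : R) (y : R3 R) i : comp3 i (c *: y) = c * comp3 i y.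
Proof. by rewrite /comp3; case: ifP => _ //; case: ifP. Qed.
Lemma comp3B (R : realType) (a b : R3 R) i : comp3 i (a - b) = comp3 i a - comp3 i b.
Proof. by rewrite /comp3; case: ifP => _ //; case: ifP. Qed.

Lemma ipartZ (R : realType) (phi : R3 R -> R3 R) (sm : smooth phi) (c : R) s :
  ipart s (fun x => c *: phi x) = (fun x => c *: ipart s phi x).
Proof.
elim: s => [//|i s IH] /=; apply/funext => x; rewrite /dpart IH.
have -> : (fun x => c *: ipart s phi x) = c \*: ipart s phi by [].
by rewrite deriveZ //; case: (sm s) => _; apply.
Qed.

Lemma smoothZ (R : realType) (phi : R3 R -> R3 R) (sm : smooth phi) (c : R) :
  smooth (fun x => c *: phi x).
Proof.
move=> s; rewrite ipartZ //; case: (sm s) => cs ds; split.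
  by move=> x; apply: continuousZr; apply: cs.
move=> i x; have -> : (fun x => c *: ipart s phi x) = c \*: ipart s phi by [].
by apply: derivableZ; apply: ds.
Qed.

Lemma test_sigmaZ (R : realType) (Om : set (R3 R)) (phi : R3 R -> R3 R) (c : R) :
  test_sigma Om phi -> test_sigma Om (fun x => c *: phi x).
Proof.
case=> sm cp sO dv.
have sub : support3 (fun x => c *: phi x) `<=` support3 phi.
  apply: closure_subset => x /=; apply: contra => /eqP ->; by rewrite scaler0.
have dZ : forall i, dpart i (fun x => c *: phi x) = (fun x => c *: dpart i phi x).
  by move=> i; have := @ipartZ R phi sm c [:: i].
split.
- exact: smoothZ.
- apply: subclosed_compact cp sub; exact: closed_closure.
- exact: subset_trans sub sO.
- move=> x; under eq_bigr do rewrite dZ comp3Z.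
  by rewrite -mulr_sumr dv mulr0.
Qed.

Lemma sobZ (R : realType) (Om B : set (R3 R)) (mB : measurable B) (OB : Om `<=` B)
  (finB : @leb3 R B \is a fin_num) (c : R) (hc : `|c| <= 1)
  (u : R3 R -> R3 R) (G : 'I_3 -> R3 R -> R3 R) :
  sob_grad Om 4 (test_sigma Om) u G ->
  sob_grad Om 2 (test_sigma Om) (fun x => c *: u x) (fun i x => c *: G i x).
Proof.
case=> mu [mG [phi [tphi cv]]]; split; [|split].
- move=> j; have -> : comp3 j \o (fun x => c *: u x) = (fun x => c * (comp3 j \o u) x).
    by apply/funext => x /=; rewrite comp3Z.
  by apply: measurable_realfun.measurable_funM => //; apply: measurable_cst.
- move=> i j; have -> : comp3 j \o (fun x => c *: G i x) = (fun x => c * (comp3 j \o G i) x).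
    by apply/funext => x /=; rewrite comp3Z.
  by apply: measurable_realfun.measurable_funM => //; apply: measurable_cst.
exists (fun k x => c *: phi k x); split; first by move=> k; apply: test_sigmaZ.
move=> j; case: (cv j) => cu cg; split.
  have -> : (fun k => LqO Om 2 (fun x => comp3 j (c *: phi k x - c *: u x))) =
            (fun k => LqO Om 2 (fun x => c * comp3 j (phi k x - u x))).
    by apply/funext => k; congr LqO; apply/funext => x; rewrite -scalerBr comp3Z.
  exact (@L42 R Om B mB OB finB c hc _ cu).
move=> i.
have dZ : forall k, dpart i (fun x => c *: phi k x) = (fun x => c *: dpart i (phi k) x).
  by move=> k; case: (tphi k) => sm _ _ _; have := @ipartZ R (phi k) sm c [:: i].
have -> : (fun k => LqO Om 2 (fun x => comp3 j (dpart i (fun x => c *: phi k x) x - c *: G i x))) =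
          (fun k => LqO Om 2 (fun x => c * comp3 j (dpart i (phi k) x - G i x))).
  by apply/funext => k; congr LqO; apply/funext => x; rewrite dZ -scalerBr comp3Z.
exact (@L42 R Om B mB OB finB c hc _ (cg i)).
Qed.

Lemma enormE (R : realType) (x : R3 R) :
  enorm x = Num.sqrt (x.1.1 ^+ 2 + x.1.2 ^+ 2 + x.2 ^+ 2).
Proof. by rewrite /enorm !big_ord_recr big_ord0 /= add0r /comp3 /=. Qed.

Lemma enorm_ge (R : realType) (x : R3 R) :
  [/\ `|x.1.1| <= enorm x, `|x.1.2| <= enorm x & `|x.2| <= enorm x].
Proof.
have := sqr_ge0 x.1.1; have := sqr_ge0 x.1.2; have := sqr_ge0 x.2.
by rewrite enormE; split; rewrite -sqrtr_sqr ler_wsqrtr //; lra.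
Qed.

Definition box {R : realType} (r : R) : set (R3 R) :=
  (`[-r, r]%classic `*` `[-r, r]%classic) `*` `[-r, r]%classic.

Lemma box_measurable (R : realType) (r : R) : measurable (box r).
Proof. by apply: measurableX; [apply: measurableX|]; apply: measurable_itv. Qed.

Lemma box_fin (R : realType) (r : R) : @leb3 R (box r) \is a fin_num.
Proof.
rewrite /leb3 /box product_measure1E; last 2 first.
- by apply: measurableX; apply: measurable_itv.
- exact: measurable_itv.
have L : (@lebesgue_measure R) (`[-r, r]%classic : set R) \is a fin_num.
  by rewrite lebesgue_measure_itv /=; case: ifP.
apply: fin_numM; last exact: L.
have P := product_measure1E (@lebesgue_measure R) (@lebesgue_measure R)
  (measurable_itv `[-r, r]) (measurable_itv `[-r, r]).
have H := fin_numM L L; rewrite -P in H; exact H.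
Qed.

Lemma sub_box (R : realType) (Om : set (R3 R)) (r : R) :
  (forall x, Om x -> enorm x <= r) -> Om `<=` box r.
Proof.
move=> H x /H xr; have [h1 h2 h3] := enorm_ge R x.
by rewrite /box /= !in_itv /= -!ler_norml !(le_trans _ xr).
Qed.

Lemma itv_in_closure (R : realType) (T t : R) : 0 < T -> 0 <= t <= T ->
  closure (`]0, T[%classic : set R) t.
Proof.
move=> T0 /andP[t0 tT] B /nbhs_ballP [e e0 eB].
set l := Num.min (2^-1 : R) (e / T).
have l0 : 0 < l by rewrite lt_min invr_gt0 ltr0n divr_gt0.
have l1 : l <= 2^-1 by rewrite ge_min lexx.
have l2 : l * T <= e by rewrite -ler_pdivlMr // ge_min lexx orbT.
exists (t + l * (T / 2 - t)); split.
  rewrite /= in_itv /=; apply/andP; split; nra.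
apply: eB; rewrite /ball /= ltr_distlC; apply/andP; split; nra.
Qed.

Lemma in_Qbar (R : realType) (Om : set (R3 R)) (T : R) x t :
  0 < T -> Om x -> 0 <= t <= T -> Qbar Om T (x, t).
Proof.
move=> T0 Ox tT B nB.
have hc : (fun s : R => (x, s)) @ t --> (x, t).
  exact: (@cvg_pair _ _ _ (nbhs t) (nbhs x) (nbhs t) _ _ _ (fun=> x) id (cvg_cst x) cvg_id).
have nB' : nbhs t ((fun s : R => (x, s)) @^-1` B) by exact: hc.
have [s [/= s1 s2]] := itv_in_closure R T t T0 tT _ nB'.
by exists (x, s); split.
Qed.

Lemma within_le (T : topologicalType) (R : realType) (S : set T) (f : T -> R)
  (g : T -> \bar R) :
  {within closure S, continuous f} -> {within closure S, continuous g} ->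
  (forall z, S z -> ((f z)%:E <= g z)%E) -> forall z, closure S z -> ((f z)%:E <= g z)%E.
Proof.
move=> /subspace_continuousP fc /subspace_continuousP gc H z Sz.
rewrite leNgt; apply/negP => gf.
have [r [gr rf]] : exists r : R, (g z < r%:E)%E /\ r < f z.
  move: gf; case: (g z) => [a||] //=.
  - rewrite lte_fin => af; exists ((a + f z) / 2); rewrite lte_fin.
    by split; lra.
  - by move=> _; exists (f z - 1); split; [rewrite ltNye|rewrite ltrBlDr ltrDl].
have N1 := fc z Sz _ (lt_nbhsr rf).
have N2 : (g @ within (closure S) (nbhs z)) [set y | (y < r%:E)%E].
  apply: gc => //; apply: open_nbhs_nbhs; split.
    have -> : [set y | (y < r%:E)%E] = `]-oo, r%:E[%classic.
      by apply/funext => y /=; rewrite in_itv.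
    exact: lray_open.
  by [].
have N1' : nbhs z [set y | closure S y -> r < f y] := N1.
have N2' : nbhs z [set y | closure S y -> (g y < r%:E)%E] := N2.
have N3 : nbhs z [set y | closure S y -> r < f y /\ (g y < r%:E)%E].
  exact: (@filterS2 _ (nbhs z) _ _ _ _ (fun y a b c => conj (a c) (b c)) N1' N2').
have [y [Sy Ny]] := Sz _ N3.
have [a b] := Ny (subset_closure Sy).
have := H y Sy; rewrite leNgt => /negP; apply.
by apply: lt_trans b _; rewrite lte_fin.
Qed.

Lemma fst_cont {U V : topologicalType} : continuous (@fst U V).
Proof. by move=> [x y]; apply: cvg_fst. Qed.
Lemma snd_cont {U V : topologicalType} : continuous (@snd U V).
Proof. by move=> [x y]; apply: cvg_snd. Qed.

Lemma enorm_cont (R : realType) : continuous (@enorm R).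
Proof.
have -> : @enorm R = fun x => Num.sqrt (x.1.1 ^+ 2 + x.1.2 ^+ 2 + x.2 ^+ 2).
  by apply/funext => x; rewrite enormE.
move=> x.
have c11 : {for x, continuous (fun x : R3 R => x.1.1)}.
  exact: (@continuous_comp (R3 R) (R * R)%type R fst fst x (fst_cont _) (fst_cont _)).
have c12 : {for x, continuous (fun x : R3 R => x.1.2)}.
  exact: (@continuous_comp (R3 R) (R * R)%type R fst snd x (fst_cont _) (snd_cont _)).
have c2 : {for x, continuous (fun x : R3 R => x.2)} by exact: snd_cont.
have e11 := @continuous_comp (R3 R) R R (fun x => x.1.1) (fun t => t ^+ 2) x c11 (@exprn_continuous R 2 _).
have e12 := @continuous_comp (R3 R) R R (fun x => x.1.2) (fun t => t ^+ 2) x c12 (@exprn_continuous R 2 _).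
have e2 := @continuous_comp (R3 R) R R (fun x => x.2) (fun t => t ^+ 2) x c2 (@exprn_continuous R 2 _).
have s3 := continuousD (continuousD e11 e12) e2.
exact: (@continuous_comp (R3 R) R R _ Num.sqrt x s3 (@sqrt_continuous R _)).
Qed.

Lemma Qbar_compact (R : realType) (Om : set (R3 R)) (T r : R) :
  (forall x, Om x -> enorm x <= r) -> compact (Qbar Om T).
Proof.
move=> H.
set K : set (R3 R * R) := box r `*` `[0, T]%classic.
have cK : compact K.
  apply: compact_setX; last exact: segment_compact.
  by apply: compact_setX; [apply: compact_setX|]; exact: segment_compact.
have clK : closed K by apply: compact_closed => //; exact: norm_hausdorff.
have sub : Qset Om T `<=` K.
  move=> [x t] [/= Ox]; rewrite /= !in_itv /= => /andP[t0 tT]; split.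
    exact: sub_box H _ Ox.
  by rewrite /= in_itv /= !ltW.
apply: subclosed_compact cK _; first exact: closed_closure.
by rewrite [X in _ `<=` X](closure_id K).1 //; apply: closure_subset.
Qed.

Lemma bounded_within (T : topologicalType) (R : realType) (A : set T) (F : T -> R) :
  compact A -> {within A, continuous F} -> exists M, forall z, A z -> F z <= M.
Proof.
move=> cA cF; have := compact_bounded (continuous_compact cF cA).
case=> M0 [_ HM]; exists (M0 + 1) => z Az.
have := HM (M0 + 1) ltac:(by rewrite ltrDl ltr01) (F z) (ex_intro2 _ _ z Az erefl).
by apply: le_trans; apply: ler_norm.
Qed.

Lemma minE_bounds (R : realType) (y : \bar R) (M : R) :
  (0 <= y)%E -> 0 <= M -> 0 <= fine (Order.min y M%:E) <= M.
Proof.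
case: y => [a||] //; rewrite ?lee_fin => a0 M0.
- by rewrite -EFin_min /= le_min a0 M0 ge_min lexx orbT.
- by rewrite minye /= M0 lexx.
Qed.

Lemma minE_ge (R : realType) (y : \bar R) (M b : R) :
  (b%:E <= y)%E -> b <= M -> b <= fine (Order.min y M%:E).
Proof.
case: y => [a||] //; rewrite ?lee_fin => ba bM.
- by rewrite -EFin_min /= le_min ba bM.
Qed.

Lemma minE_fin (R : realType) (a M : R) : fine (Order.min a%:E M%:E) = Num.min a M.
Proof. by rewrite -EFin_min. Qed.

Lemma minE_big (R : realType) (y : \bar R) (M K : R) :
  M < K -> (K%:E < y)%E -> fine (Order.min y M%:E) = M.
Proof.
case: y => [a||] //; rewrite ?lte_fin => MK Ka.
- by rewrite -EFin_min /=; apply/min_idPr; rewrite ltW // (lt_trans MK).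
Qed.

Lemma min_lip (R : realType) (a b M : R) :
  `|Num.min a M - Num.min b M| <= `|a - b|.
Proof.
have h1 := ler_norm (a - b).
have h2 : -(a - b) <= `|a - b| by rewrite -normrN ler_norm.
case: (leP a M) => aM; case: (leP b M) => bM; rewrite ler_norml; apply/andP; split; lra.
Qed.

Lemma enormZ (R : realType) (c : R) (y : R3 R) : enorm (c *: y) = `|c| * enorm y.
Proof.
rewrite !enormE /= -sqrtr_sqr -sqrtrM ?sqr_ge0 //; congr Num.sqrt.
by rewrite !exprMn; ring.
Qed.

Lemma enorm_ge0 (R : realType) (y : R3 R) : 0 <= enorm y.
Proof. exact: sqrtr_ge0. Qed.

Theorem lemma2p3 (R : realType) (Om : set (R3 R)) (T : R)
  (p : R3 R -> R -> \bar R) (pn : nat -> R3 R -> R -> R)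
  (v : R -> R3 R -> R3 R) (delta : R) :
  smooth_bounded_domain Om -> 0 < T ->
  obstacle Om T p -> approx_seq Om T p pn ->
  C_W_sigma Om T v ->
  {within Qbar Om T, continuous (fun z : R3 R * R => v z.2 z.1)} ->
  (forall x t, Qset Om T (x, t) -> ((enorm (v t x))%:E <= p x t)%E) ->
  0 < delta ->
  supp_v Om T v `<=` [set z | Om z.1 /\ 0 <= z.2 <= T /\ (delta%:E <= p z.1 z.2)%E] ->
  let M := delta + sup [set enorm (v z.2 z.1) | z in Qset Om T] in
  let deltan := fun n : nat => delta^-1 *
    sup [set `|fine (Order.min (p z.1 z.2) M%:E) - Order.min (pn n z.1 z.2) M|
         | z in supp_v Om T v] in
  (deltan @ \oo --> 0) /\
  forall (n : nat) (t : R), 0 <= t <= T ->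
    Kset Om (pn n) t (fun x => Num.max (1 - deltan n) 0 *: v t x).
Proof.
move=> Hdom T0 [pc p0] [pn0 _ apc apd] Cv vc vp d0 suppH M deltan.
case: Hdom => _ _ [x0 Ox0] [r Hr] _.
set F := fun z : R3 R * R => enorm (v z.2 z.1).
have Fc : {within Qbar Om T, continuous F}.
  by apply: (within_continuous_comp _ (fun z => v z.2 z.1) (@enorm R)) => // y _; apply: enorm_cont.
have cQ := Qbar_compact R Om T r Hr.
have QQ : Qset Om T `<=` Qbar Om T by apply: subset_closure.
have [Mb HMb] := bounded_within _ R _ F cQ Fc.
set E := [set enorm (v z.2 z.1) | z in Qset Om T].
have Qx0 : Qset Om T (x0, T / 2).
  by split => //=; rewrite in_itv /=; apply/andP; split; lra.
have hsE : has_sup E.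
  split; first by exists (F (x0, T/2)), (x0, T/2).
  by exists Mb => _ [z Qz <-]; apply: HMb; apply: QQ.
have HS : forall z, Qset Om T z -> F z <= sup E.
  by move=> z Qz; apply: ub_le_sup; [case: hsE|exists z].
have HSbar : forall z, Qbar Om T z -> F z <= sup E.
  move=> z Qz; rewrite -lee_fin.
  apply: (within_le _ R (Qset Om T) F (fun=> (sup E)%:E) Fc); last exact: Qz.
    exact: cst_continuous.
  by move=> y Qy; rewrite lee_fin; apply: HS.
have Hp : forall z, Qbar Om T z -> ((F z)%:E <= p z.1 z.2)%E.
  apply: (within_le _ R (Qset Om T) F (fun z => p z.1 z.2) Fc pc).
  by move=> [x t] Qz; apply: vp.
have S0 : 0 <= sup E by apply: le_trans (HS _ Qx0); apply: enorm_ge0.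
have M0 : delta <= M by rewrite /M lerDl.
have DQ : supp_v Om T v `<=` Qbar Om T.
  by move=> [x t] /suppH [/= Ox [tT _]]; apply: in_Qbar.
set En := fun n => [set `|fine (Order.min (p z.1 z.2) M%:E) - Order.min (pn n z.1 z.2) M|
         | z in supp_v Om T v].
have M0' : 0 <= M by apply: le_trans M0; apply: ltW.
have Eb : forall n y, En n y -> 0 <= y <= M.
  move=> n _ [z Dz <-]; rewrite normr_ge0 /=.
  have /andP[a0 aM] := minE_bounds R _ M (p0 z (DQ z Dz)) M0'.
  have b0 : 0 <= Order.min (pn n z.1 z.2) M.
    by rewrite le_min M0' ltW // pn0 //; apply: DQ.
  have bM : Order.min (pn n z.1 z.2) M <= M by rewrite ge_min lexx orbT.
  by rewrite ler_norml; apply/andP; split; lra.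
have elem : forall n y, En n y -> y <= sup (En n).
  move=> n y Ey; apply: ub_le_sup => //; exists M => w /Eb /andP[].
  by [].
have supge0 : forall n, 0 <= sup (En n).
  move=> n; have [[y Ey]|] := pselect (En n !=set0).
    by apply: le_trans (elem n y Ey); case/andP: (Eb n y Ey).
  move=> /set0P/negP; rewrite negbK => /eqP ->; by rewrite sup0.
have dn0 : forall n, 0 <= deltan n.
  by move=> n; rewrite /deltan; apply: mulr_ge0; [rewrite invr_ge0 ltW|exact: supge0].
split.
  apply/cvgrPdist_le => e e0.
  set eta := e * delta.
  have eta0 : 0 < eta by rewrite mulr_gt0.
  case: apd => M1 HM1.
  set K := Num.max M1 (M + 1).
  have K0 : 0 < K by rewrite lt_max; apply/orP; right; rewrite ltr_wpDl.
  have MK : M < K by rewrite lt_max; apply/orP; right; rewrite ltrDl.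
  have [nM HnM] := HM1 K ltac:(by rewrite le_max lexx) K0.
  have [N HN] := apc K K0 eta eta0.
  exists (maxn N nM) => // n /= Hn.
  have Nn : (N <= n)%N by apply: leq_trans Hn; apply: leq_maxl.
  have nMn : (nM <= n)%N by apply: leq_trans Hn; apply: leq_maxr.
  rewrite sub0r normrN ger0_norm ?dn0 // /deltan mulrC ler_pdivrMr // -/eta.
  change (sup (En n) <= eta).
  have ub : ubound (En n) eta.
    move=> _ [z Dz <-]; have Qz := DQ z Dz.
    have [pK|Kp] := leP (p z.1 z.2) K%:E.
      have [a pa] : exists a, p z.1 z.2 = a%:E.
        move: (p0 z Qz) pK; case: (p z.1 z.2) => [a||] //; by exists a.
      rewrite pa minE_fin; apply: le_trans (min_lip _ _ _ _) _.
      have := HN n z Nn Qz pK; rewrite pa -EFinB abse_EFin lee_fin distrC.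
      by [].
    rewrite (minE_big R _ M K MK Kp).
    have [Kpn _] := HnM n z nMn Qz Kp.
    rewrite (_ : Order.min (pn n z.1 z.2) M = M) ?subrr ?normr0 ?ltW //.
    by apply/min_idPr; apply: le_trans Kpn; apply: ltW.
  have [[y Ey]|] := pselect (En n !=set0).
    by apply: ge_sup; [exists y|].
  move=> /set0P/negP; rewrite negbK => /eqP ->; by rewrite sup0 ltW.
move=> n t tT.
set c := Num.max (1 - deltan n) 0.
have c0 : 0 <= c by rewrite le_max lexx orbT.
have c1 : c <= 1 by rewrite ge_max ler01 andbT lerBlDr lerDl dn0.
split.
  case: Cv => G [HG _]; exists (fun i x => c *: G t i x).
  apply: (sobZ R Om (box r) (box_measurable R r) (sub_box R Om r Hr) (box_fin R r) c _ (v t) (G t) (HG t tT)).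
  by rewrite ger0_norm.
apply: aeW => x Ox.
rewrite enormZ ger0_norm //.
have Qz : Qbar Om T (x, t) by apply: in_Qbar.
have pnpos := pn0 n (x, t) Qz; rewrite /= in pnpos.
have [v0|vn0] := eqVneq (v t x) 0.
  have -> : enorm (v t x) = 0 by rewrite v0 enormE /= expr0n /= !addr0 sqrtr0.
  by rewrite mulr0 ltW.
have Dz : supp_v Om T v (x, t).
  by apply: (@subset_closure _ _ (x, t)); split; [|split].
have [_ [_ dp]] := suppH _ Dz; rewrite /= in dp.
have FS := HSbar (x, t) Qz; have Hpz := Hp (x, t) Qz.
rewrite /F /= in FS Hpz.
set a := fine (Order.min (p x t) M%:E).
have aF : enorm (v t x) <= a.
  by apply: minE_ge => //; apply: le_trans FS _; rewrite /M lerDr ltW.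
have ad : delta <= a by apply: minE_ge.
have el := elem n _ (ex_intro2 _ _ (x, t) Dz erefl).
have sE : sup (En n) = delta * deltan n.
  by rewrite /deltan mulrA divff ?mul1r // gt_eqF.
rewrite sE /= -/a in el.
have bpn : Order.min (pn n x t) M <= pn n x t by rewrite ge_min lexx.
have el' : a - Order.min (pn n x t) M <= delta * deltan n.
  by apply: le_trans el; apply: ler_norm.
have F0 := enorm_ge0 R (v t x).
have dn := dn0 n.
have [h|h] := leP (1 - deltan n) 0.
  rewrite /c (_ : Num.max (1 - deltan n) 0 = 0) ?mul0r ?ltW //.
  by apply/max_idPr.
rewrite /c (_ : Num.max (1 - deltan n) 0 = 1 - deltan n); last by apply/max_idPl; apply: ltW.
have h1 : 0 <= (1 - deltan n) * (a - enorm (v t x)) by apply: mulr_ge0; [apply: ltW|rewrite subr_ge0].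
have h2 : 0 <= deltan n * (a - delta) by apply: mulr_ge0; [|rewrite subr_ge0].
nra.
Qed.
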